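(* Let $E=\mathbb{R}^n$, let $d\ge 1$ be an integer, $m\in(0,1)$, $a>0$, and let $\mu$ be a probability measure on $E$ such that for every $x\in\operatorname{supp}\mu$ and every $r<(m/a)^{1/d}$ we have $\mu(B(x,r))\ge a r^d$, where $B(x,r)$ is the open ball. Then $c(\mu):=\sup_{x\in\operatorname{supp}\mu} d_{\mu,m}(x)\le a^{-1/d} m^{1/d}$.
   Context: For a probability measure $\mu$ on $E$, $t\in[0,1)$ and $x\in E$, let $\delta_{\mu,t}(x)=\inf\{r\ge 0:\ \mu(\bar B(x,r))>t\}$, where $\bar B(x,r)$ is the closed Euclidean ball. The distance to measure (DTM) with parameter $m$ is the function $d_{\mu,m}:E\to\mathbb{R}$ defined by $d_{\mu,m}^2(x)=\frac1m\int_0^m\delta_{\mu,t}^2(x)\,dt$. *)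

(* Defs.v *)
From mathcomp Require Import all_boot all_order all_algebra.
From mathcomp Require Import all_classical all_reals all_analysis.
Set Implicit Arguments. Unset Strict Implicit. Unset Printing Implicit Defensive.
Import Order.TTheory GRing.Theory Num.Theory.
Local Open Scope classical_set_scope.
Local Open Scope ring_scope.

(* E = R^n is modelled by n.-tuple R, which MathComp-Analysis equips with the
   product sigma-algebra (= the Borel sigma-algebra of R^n). *)

Definition edist (R : realType) (n : nat) (x y : n.-tuple R) : R :=
  Num.sqrt (\sum_(i < n) (tnth x i - tnth y i) ^+ 2).

Definition oball (R : realType) (n : nat) (x : n.-tuple R) (r : R) :
  set (n.-tuple R) := [set y | edist x y < r].

Definition cball (R : realType) (n : nat) (x : n.-tuple R) (r : R) :
  set (n.-tuple R) := [set y | edist x y <= r].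

Definition supp (R : realType) (n : nat)
  (mu : probability (n.-tuple R) R) : set (n.-tuple R) :=
  [set x | forall r : R, 0 < r -> (0 < mu (oball x r))%E].

Definition delta_mu (R : realType) (n : nat)
  (mu : probability (n.-tuple R) R) (t : R) (x : n.-tuple R) : R :=
  inf [set r : R | 0 <= r /\ (t%:E < mu (cball x r))%E].

Definition dtm (R : realType) (n : nat)
  (mu : probability (n.-tuple R) R) (m : R) (x : n.-tuple R) : R :=
  Num.sqrt (m^-1 * fine (\int[lebesgue_measure]_(t in `[0%R, m]%classic)
                           ((delta_mu mu t x) ^+ 2)%:E)).

(* Main.v *)
Require Import Defs.
From mathcomp Require Import all_boot all_order all_algebra.
From mathcomp Require Import all_classical all_reals all_analysis.
From mathcomp Require Import measurable_realfun.
Import Order.TTheory GRing.Theory Num.Theory.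
Local Open Scope classical_set_scope.
Local Open Scope ring_scope.

Lemma edist_measurable (R : realType) (n : nat) (x : n.-tuple R) :
  measurable_fun setT (Defs.edist x).
Proof.
rewrite /Defs.edist.
apply: (@measurable_comp _ _ _ _ _ _ setT (@Num.sqrt R)) => //.
  exact: measurable_realfun.nondecreasing_measurable (@ler_wsqrtr R).
apply: measurable_sum => i.
apply: measurable_realfun.measurable_funX.
apply: measurable_realfun.measurable_funB => //.
exact: measurable_tnth.
Qed.

Lemma oball_measurable (R : realType) (n : nat) (x : n.-tuple R) r :
  measurable (oball x r).
Proof.
have := @edist_measurable _ _ x measurableT _ (measurable_itv `]-oo, r[).
rewrite setTI; congr measurable; apply/seteqP; split => y /=;
  by rewrite in_itv.
Qed.

Lemma cball_measurable (R : realType) (n : nat) (x : n.-tuple R) r :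
  measurable (cball x r).
Proof.
have := @edist_measurable _ _ x measurableT _ (measurable_itv `]-oo, r]).
rewrite setTI; congr measurable; apply/seteqP; split => y /=;
  by rewrite in_itv.
Qed.

Section delta.
Context (R : realType) (n : nat) (mu : probability (n.-tuple R) R).

Lemma delta_ge0 t x : 0 <= delta_mu mu t x.
Proof.
rewrite /delta_mu; set S := [set r | _].
have [[r Sr]|] := pselect (S !=set0).
  by apply: lb_le_inf; [exists r | move=> y [] ].
by move/set0P/negP; rewrite negbK => /eqP ->; rewrite inf0.
Qed.

Lemma delta_le t x r : 0 <= r -> (t%:E < mu (cball x r))%E ->
  delta_mu mu t x <= r.
Proof.
move=> r0 tr; apply: ge_inf; last by split.
by exists 0 => y [].
Qed.

Lemma delta_mono t s x : t <= s ->
  (exists r, 0 <= r /\ (s%:E < mu (cball x r))%E) ->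
  delta_mu mu t x <= delta_mu mu s x.
Proof.
move=> ts [r Sr]; apply: lb_le_inf; first by exists r.
move=> y [y0 sy]; apply: delta_le => //.
by apply: le_lt_trans sy; rewrite lee_fin.
Qed.
End delta.

Lemma key (R : realType) (n d : nat) (m a : R)
  (mu : probability (n.-tuple R) R) x t :
  (1 <= d)%N -> 0 < m -> 0 < a ->
  (forall r : R, 0 < r -> r < (m / a) `^ (d%:R)^-1 ->
       ((a * r ^+ d)%:E <= mu (oball x r))%E) ->
  0 <= t < m ->
  exists r, 0 < r < (m / a) `^ (d%:R)^-1 /\ (t%:E < mu (cball x r))%E.
Proof.
move=> d1 m0 a0 H /andP[t0 tm].
set p := (d%:R)^-1.
have dn0 : (d%:R : R) != 0 by rewrite pnatr_eq0 -lt0n.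
have p0 : 0 < p by rewrite invr_gt0 ltr0n.
set r0 := (m / a) `^ p.
set s := (t / a) `^ p.
have s0 : 0 <= s by apply: powR_ge0.
have sr0 : s < r0.
  apply: gt0_ltr_powR => //; rewrite ?nnegrE ?divr_ge0 ?(ltW a0) ?(ltW m0)//.
  by rewrite ltr_pM2r ?invr_gt0.
exists ((s + r0) / 2).
have rr0 : (s + r0) / 2 < r0 by rewrite ltr_pdivrMr // mulrDr mulr1 ltrD2r.
have sr : s < (s + r0) / 2 by rewrite ltr_pdivlMr // mulrDr mulr1 ltrD2l.
split.
  by rewrite rr0 andbT; apply: le_lt_trans sr.
have sd : s ^+ d = t / a.
  by rewrite -powR_mulrn // -powRrM mulVf // powRr1 // divr_ge0 // ltW.
have : (t%:E < (a * ((s + r0) / 2) ^+ d)%:E)%E.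
  have -> : t = a * s ^+ d by rewrite sd mulrC divfK // lt0r_neq0.
  rewrite lte_fin ltr_pM2l //.
  by rewrite ltrXn2r // -lt0n.
move/lt_le_trans; apply.
apply: (le_trans (H _ _ rr0)).
  by apply: le_lt_trans sr.
apply: le_measure; rewrite ?inE; [exact: oball_measurable|exact: cball_measurable|].
by move=> y /= /ltW.
Qed.

Theorem lemma1p4 (R : realType) (n d : nat) (m a : R)
  (mu : probability (n.-tuple R) R) :
  (1 <= d)%N -> 0 < m < 1 -> 0 < a ->
  (forall x, supp mu x ->
     forall r : R, 0 < r -> r < (m / a) `^ (d%:R)^-1 ->
       ((a * r ^+ d)%:E <= mu (oball x r))%E) ->
  (ereal_sup [set (dtm mu m x)%:E | x in supp mu] <=
     (a `^ (- (d%:R)^-1) * m `^ (d%:R)^-1)%:E)%E.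
Proof.
move=> d1 /andP[m0 m1] a0 H.
set p := (d%:R)^-1.
set r0 := (m / a) `^ p.
have r0E : a `^ (- p) * m `^ p = r0.
  rewrite /r0 powRM ?invr_ge0 ?(ltW a0) ?(ltW m0) // mulrC; congr (_ * _).
  by rewrite -(powR_inv1 (ltW a0)) -powRrM mulN1r.
have r0pos : 0 < r0 by apply: powR_gt0; rewrite divr_gt0.
rewrite r0E; apply: ge_ereal_sup => _ [x sx <-]; rewrite lee_fin.
have dle t : 0 <= t < m -> delta_mu mu t x <= r0.
  move=> tm; have [r [/andP[r0' rr0] tr]] := @key _ _ _ _ _ mu _ _ d1 m0 a0 (H x sx) tm.
  by apply: le_trans (ltW rr0); apply: delta_le => //; apply: ltW.
pose g t := if t < m then delta_mu mu (Num.max t 0) x else r0.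
have gnd : nondecreasing_fun g.
  move=> t s ts; rewrite /g.
  case: ifPn => tm; case: ifPn => sm.
  - apply: delta_mono; first by rewrite ge_max !le_max ts lexx !orbT.
    have [|r [/andP[r0' _] tr]] := @key _ _ _ _ _ mu x (Num.max s 0) d1 m0 a0 (H x sx).
      by rewrite le_max lexx orbT /= gt_max sm m0.
    by exists r; split => //; apply: ltW.
  - by apply: dle; rewrite le_max lexx orbT /= gt_max tm m0.
  - by rewrite -leNgt in tm; move: sm; rewrite ltNge (le_trans tm ts).
  - by [].
have mdelta : measurable_fun `[0, m[ (fun t => delta_mu mu t x).
  apply: (eq_measurable_fun g); last first.
    exact: measurable_realfun.nondecreasing_measurable gnd.
  move=> t; rewrite inE /= in_itv /= => /andP[t0 tm].
  by rewrite /g tm max_l.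
have mf : measurable_fun `[0, m[ (EFin \o (fun t => ((delta_mu mu t x) ^+ 2))).
  apply/measurable_EFinP; exact: measurable_realfun.measurable_funX.
have I1 := integral_itv_bndo_bndc mf.
have Ile : (\int[lebesgue_measure]_(t in `[0%R, m]%classic)
              ((delta_mu mu t x) ^+ 2)%:E <= (r0 ^+ 2 * m)%:E)%E.
  rewrite -I1.
  apply: (@le_trans _ _ (\int[lebesgue_measure]_(t in `[0%R, m[%classic)
              (cst (r0 ^+ 2)%:E) t)%E).
    apply: ge0_le_integral => //.
    - by move=> t _; rewrite lee_fin exprn_ge0 // delta_ge0.
    - move=> t; rewrite /= in_itv /= => tm; rewrite lee_fin.
      apply: (lterXn2r _).1; rewrite ?nnegrE ?delta_ge0 ?(ltW r0pos) //.
      exact: dle.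
  rewrite integral_cst //= lebesgue_measure_itv /= lte_fin m0 sube0 //.
have I0 : (0 <= \int[lebesgue_measure]_(t in `[0%R, m]%classic)
              ((delta_mu mu t x) ^+ 2)%:E)%E.
  by apply: integral_ge0 => t _; rewrite lee_fin sqr_ge0.
have fI : fine (\int[lebesgue_measure]_(t in `[0%R, m]%classic)
              ((delta_mu mu t x) ^+ 2)%:E) <= r0 ^+ 2 * m.
  have gen (I : \bar R) : (0 <= I)%E -> (I <= (r0 ^+ 2 * m)%:E)%E ->
    fine I <= r0 ^+ 2 * m.
    by case: I => [r | |] //=; rewrite ?lee_fin.
  exact: gen.
rewrite /dtm -(ger0_norm (ltW r0pos)) -sqrtr_sqr; apply: ler_wsqrtr.
by rewrite mulrC ler_pdivrMr.
Qed.
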